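(* Let $R=K[x_1,\ldots,x_n]$ be a polynomial ring over a field $K$, $I\subset R$ a monomial ideal, $\ell$ a positive integer, $v$ a square-free monomial of $R$ with $v\in I^\ell$, and $\mathfrak{p}$ a monomial prime ideal of $R$ such that, for some positive integer $s$, $\mathfrak{p}\setminus x_i\notin\mathrm{Ass}(R/(I\setminus x_i)^s)$ for every variable $x_i$ dividing $v$. If $\mathfrak{p}\in\mathrm{Ass}(R/I^s)$, then $s>\ell$.
   Context: For a monomial ideal $I\subset R$, $\mathcal{G}(I)$ denotes its unique minimal set of monomial generators. For a variable $x_i$, the deletion $I\setminus x_i$ is the monomial ideal of $R$ generated by those $u\in\mathcal{G}(I)$ with $x_i\nmid u$. For a monomial prime ideal $\mathfrak{p}$ (generated by variables), $\mathfrak{p}\setminus x_i$ is the ideal generated by the variables of $\mathfrak{p}$ other than $x_i$. *)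

(* Defs.v *)
From HB Require Import structures.
From mathcomp Require Import all_boot all_algebra.
From mathcomp Require Import mpoly.
Set Implicit Arguments. Unset Strict Implicit. Unset Printing Implicit Defensive.
Import GRing.Theory.
Local Open Scope ring_scope.

Definition ideal_gen (R : comNzRingType) (S : R -> Prop) : R -> Prop :=
  fun f => exists (k : nat) (r g : 'I_k -> R),
    (forall j, S (g j)) /\ f = \sum_(j < k) r j * g j.

Definition ideal_pow (R : comNzRingType) (I : R -> Prop) (s : nat) : R -> Prop :=
  ideal_gen (fun f => exists g : 'I_s -> R,
    (forall j, I (g j)) /\ f = \prod_(j < s) g j).

Definition prime_ideal (R : comNzRingType) (P : R -> Prop) : Prop :=
  [/\ P 0, (forall a b, P a -> P b -> P (a + b)),
      (forall a b, P b -> P (a * b)), ~ P 1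
    & (forall a b, P (a * b) -> P a \/ P b)].

(* P \in Ass(R/J): P is a prime ideal of the form (J : f) for some f in R. *)
Definition Ass (R : comNzRingType) (J P : R -> Prop) : Prop :=
  prime_ideal P /\ exists f : R, forall g, P g <-> J (g * f).

Definition monomial_ideal_gen (K : fieldType) (n : nat)
  (A : 'X_{1..n} -> Prop) : {mpoly K[n]} -> Prop :=
  ideal_gen (fun f => exists2 m, A m & f = 'X_[m]).

Definition is_monomial_ideal (K : fieldType) (n : nat)
  (I : {mpoly K[n]} -> Prop) : Prop :=
  exists A : 'X_{1..n} -> Prop, forall f, I f <-> monomial_ideal_gen A f.

Definition min_gens (K : fieldType) (n : nat) (I : {mpoly K[n]} -> Prop)
  : 'X_{1..n} -> Prop :=
  fun m => I 'X_[m] /\ forall m', I 'X_[m'] -> (m' <= m)%MM -> m' = m.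

Definition deletion (K : fieldType) (n : nat) (I : {mpoly K[n]} -> Prop)
  (i : 'I_n) : {mpoly K[n]} -> Prop :=
  monomial_ideal_gen (fun m => min_gens I m /\ m i = 0%N).

Definition monoprime (K : fieldType) (n : nat) (P : {set 'I_n})
  : {mpoly K[n]} -> Prop :=
  ideal_gen (fun f => exists2 j, j \in P & f = 'X_j).

Definition squarefree (n : nat) (v : 'X_{1..n}) : Prop := forall i, (v i <= 1)%N.

(* Main.v *)
Require Import Defs.
From mathcomp Require Import all_boot all_algebra.
From mathcomp Require Import mpoly.
From Stdlib Require Import Classical.
From mathcomp Require Import ring.
Set Implicit Arguments. Unset Strict Implicit. Unset Printing Implicit Defensive.
Import GRing.Theory.
Local Open Scope ring_scope.

Section Gen.
Variable R : comNzRingType.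
Variable S : R -> Prop.

Lemma gen0 : ideal_gen S 0.
Proof. by exists 0%N, (fun _ => 0), (fun _ => 0); split => [[]//|]; rewrite big_ord0. Qed.

Lemma genM a x : ideal_gen S x -> ideal_gen S (a * x).
Proof.
case=> k [r [g [Hg ->]]]; exists k, (fun j => a * r j), g; split=> //.
by rewrite big_distrr /=; apply: eq_bigr => j _; rewrite mulrA.
Qed.

Lemma genD x y : ideal_gen S x -> ideal_gen S y -> ideal_gen S (x + y).
Proof.
case=> k1 [r1 [g1 [Hg1 ->]]]; case=> k2 [r2 [g2 [Hg2 ->]]].
exists (k1 + k2)%N, (fun j => match split j with inl a => r1 a | inr b => r2 b end),
  (fun j => match split j with inl a => g1 a | inr b => g2 b end); split.
  by move=> j; case: (split j).
rewrite big_split_ord /=; congr (_ + _); apply: eq_bigr => j _.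
  by rewrite (unsplitK (inl j)).
by rewrite (unsplitK (inr j)).
Qed.

Lemma genS x : S x -> ideal_gen S x.
Proof.
move=> Sx; exists 1%N, (fun _ => 1), (fun _ => x); split => //.
by rewrite big_ord1 mul1r.
Qed.
End Gen.

Section Mon.
Variables (K : fieldType) (n : nat).
Notation poly := {mpoly K[n]}.
Notation mon := 'X_{1..n}.

Definition InMon (D : mon -> Prop) (g : poly) := forall m, m \in msupp g -> D m.

Lemma mon_to_J (J : poly -> Prop) (D : mon -> Prop) g :
  J 0 -> (forall x y, J x -> J y -> J (x + y)) -> (forall a x, J x -> J (a * x)) ->
  (forall m, D m -> J 'X_[m]) -> InMon D g -> J g.
Proof.
move=> J0 JD JM JX Hg; rewrite (mpolyE g) big_seq.
apply: (big_ind J) => // m Hm.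
by rewrite -mul_mpolyC; apply: JM; apply: JX; apply: Hg.
Qed.

Lemma gen_mon (A : mon -> Prop) g :
  monomial_ideal_gen A g <-> InMon (fun m => exists2 a, A a & (a <= m)%MM) g.
Proof.
split.
  case=> k [r [h [Hh ->]]] m /msupp_sum_le /flattenP [s /mapP [j _ ->]].
  case: (Hh j) => a Aa ->.
  rewrite (perm_mem (msuppMX _ _)) => /mapP [m' _ ->].
  by exists a => //; apply: lem_addr.
apply: mon_to_J; [exact: gen0 | exact: genD | exact: genM |].
move=> m [a Aa le_am].
rewrite -(submK le_am) mpolyXD; apply: genM; apply: genS; by exists a.
Qed.

Lemma InMon_X D m : InMon D 'X_[m] <-> D m.
Proof.
rewrite /InMon msuppX; split; first by apply; rewrite mem_seq1.
by move=> Dm m'; rewrite mem_seq1 => /eqP ->.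
Qed.

Definition mideal (J : poly -> Prop) :=
  forall g, J g <-> InMon (fun m => J 'X_[m]) g.

Lemma gen_mideal A : mideal (monomial_ideal_gen A).
Proof.
move=> g; rewrite gen_mon; split => H m Hm.
  by apply/gen_mon/InMon_X; apply: H.
by move/gen_mon/InMon_X: (H m Hm).
Qed.

Lemma is_mon_mideal (I : poly -> Prop) : is_monomial_ideal I -> mideal I.
Proof.
case=> A HA g; rewrite HA gen_mideal; split => H m Hm.
  by apply/HA; apply: H.
by apply/HA; apply: H.
Qed.



Definition Ideal (J : poly -> Prop) :=
  [/\ J 0, (forall x y, J x -> J y -> J (x + y)) & (forall a x, J x -> J (a * x))].

Lemma gen_Ideal S : Ideal (ideal_gen S).
Proof. by split; [exact: gen0 | exact: genD | exact: genM]. Qed.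

Lemma is_mon_Ideal I : is_monomial_ideal I -> Ideal I.
Proof.
case=> A HA; split.
- by apply/HA; exact: gen0.
- by move=> x y /HA Hx /HA Hy; apply/HA; apply: genD.
- by move=> a x /HA Hx; apply/HA; apply: genM.
Qed.

Lemma Ideal_up J a b : Ideal J -> J 'X_[a] -> (a <= b)%MM -> J 'X_[b].
Proof.
case=> _ _ JM Ja le_ab; rewrite -(submK le_ab) mpolyXD; exact: JM.
Qed.

Definition msum (ts : seq mon) : mon := \big[+%MM/0%MM]_(x <- ts) x.

Lemma prodsupp s (h : 'I_s -> poly) m : m \in msupp (\prod_(k < s) h k) ->
  exists ts, [/\ size ts = s, (forall k : 'I_s, nth 0%MM ts k \in msupp (h k)) &
     m = msum ts].
Proof.
elim: s h m => [|s IH] h m.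
  rewrite big_ord0 -mpolyX0 msuppX mem_seq1 => /eqP ->.
  by exists [::]; split => //; [case | rewrite /msum big_nil].
rewrite big_ord_recl => /msuppM_le /allpairsP [[m1 m2] /= [H1 H2 ->]].
case: (IH _ _ H2) => ts [Hs Hn ->].
exists (m1 :: ts); split; first by rewrite /= Hs.
  case=> [[|k] Hk] /=.
    by move: H1; congr (_ \in msupp (h _)); apply: val_inj.
  have Hk' : (k < s)%N by [].
  have := Hn (Ordinal Hk').
  by congr (_ \in msupp (h _)); apply: val_inj.
by rewrite /msum big_cons.
Qed.

Definition Dpow (J : poly -> Prop) s (m : mon) :=
  exists ts, [/\ size ts = s, (forall x, x \in ts -> J 'X_[x]) & (msum ts <= m)%MM].

Lemma mpolyX_msum ts : 'X_[msum ts] = \prod_(x <- ts) 'X_[x] :> poly.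
Proof.
rewrite /msum; elim: ts => [|x ts IH]; first by rewrite !big_nil mpolyX0.
by rewrite !big_cons mpolyXD IH.
Qed.

Lemma pow_mon J s : mideal J -> Ideal J ->
  forall g, ideal_pow J s g <-> InMon (Dpow J s) g.
Proof.
move=> HJ IJ g; split.
  case=> k [r [h [Hh ->]]] m /msupp_sum_le /flattenP [sq /mapP [j _ ->]].
  case: (Hh j) => t [Ht ->].
  move=> /msuppM_le /allpairsP [[m1 m2] /= [H1 H2 ->]].
  case: (prodsupp H2) => ts [Hs Hn ->].
  exists ts; split => //; last by apply: lem_addl.
  move=> x Hx; have Hi : (index x ts < s)%N by rewrite -Hs index_mem.
  have := Hn (Ordinal Hi); rewrite /= nth_index // => Hm.
  by have := (HJ _).1 (Ht (Ordinal Hi)) _ Hm.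
have [J0 JD JM] := gen_Ideal (fun f => exists g : 'I_s -> poly,
    (forall j, J (g j)) /\ f = \prod_(j < s) g j).
apply: mon_to_J => // m [ts [Hs Hts Hle]].
rewrite -(submK Hle) mpolyXD; apply: JM; apply: genS.
exists (fun j : 'I_s => 'X_[nth 0%MM ts j]); split.
  by move=> j; apply: Hts; apply: mem_nth; rewrite Hs.
rewrite mpolyX_msum (big_nth 0%MM) big_mkord Hs.
done.
Qed.


Lemma gen_ext (S S' : poly -> Prop) : (forall f, S f <-> S' f) ->
  forall g, ideal_gen S g -> ideal_gen S' g.
Proof.
move=> H g [k [r [h [Hh ->]]]]; exists k, r, h; split => // j; exact/H.
Qed.

Definition Cq (Q : {set 'I_n}) (m : mon) := exists2 j, j \in Q & (0 < m j)%N.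

Lemma monoprime_mon Q g : monoprime Q g <-> InMon (Cq Q) g.
Proof.
pose A := fun a : mon => exists2 j, j \in Q & a = U_(j)%MM.
have E : forall g : poly, monoprime Q g <-> monomial_ideal_gen A g.
  have HS : forall f : poly, (exists2 j, j \in Q & f = 'X_j) <-> (exists2 m, A m & f = 'X_[m]).
    move=> f; split.
    - by case=> j Hj ->; exists U_(j)%MM => //; exists j.
    - by case=> a [j Hj ->] ->; exists j.
  move=> h; rewrite /monoprime /monomial_ideal_gen; split; apply: gen_ext => f //.
  by split => /HS.
rewrite E gen_mon; split => H m Hm.
  case: (H m Hm) => a [j Hj ->]; rewrite lep1mP => Hn; by exists j; rewrite // lt0n.
case: (H m Hm) => j Hj Hn; exists U_(j)%MM; first by exists j.
by rewrite lep1mP -lt0n.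
Qed.

Lemma monoprime_Ideal Q : Ideal (monoprime Q).
Proof. exact: gen_Ideal. Qed.

Lemma deletion_mon (I : poly -> Prop) i g : deletion I i g <->
  InMon (fun m => exists2 w, min_gens I w /\ w i = 0%N & (w <= m)%MM) g.
Proof. exact: gen_mon. Qed.

Lemma deletion_mideal (I : poly -> Prop) i : mideal (deletion I i).
Proof. exact: gen_mideal. Qed.

Lemma deletion_Ideal (I : poly -> Prop) i : Ideal (deletion I i).
Proof. exact: gen_Ideal. Qed.

Lemma mingen_exists (I : poly -> Prop) m : I 'X_[m] -> exists2 w, min_gens I w & (w <= m)%MM.
Proof.
move: {2}(mdeg m) (leqnn (mdeg m)) => d; elim: d m => [|d IH] m Hd Im.
  have E0 : m = 0%MM by apply/eqP; rewrite -mdeg_eq0 -leqn0.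
  subst m.
  exists 0%MM; last exact: lepm_refl.
  split=> // m' _ /mnm_lepP H; apply/mnmP => j; apply/eqP; rewrite mnm0E -leqn0.
  by have := H j; rewrite mnm0E.
case: (Classical_Prop.classic (forall m', I 'X_[m'] -> (m' <= m)%MM -> m' = m)) => Hc.
  by exists m => //; exact: lepm_refl.
have [m' [Im' [le' ne']]] : exists m', I 'X_[m'] /\ (m' <= m)%MM /\ m' <> m.
  apply: Classical_Prop.NNPP => Hn; apply: Hc => m' H1 H2.
  by apply: Classical_Prop.NNPP => H3; apply: Hn; exists m'.
have Hlt : (mdeg m' < mdeg m)%N.
  rewrite -(submK le') mdegD -[X in (X < _)%N]add0n ltn_add2r lt0n mdeg_eq0.
  apply/eqP => H0; apply: ne'; by rewrite -(submK le') H0 add0m.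
case: (IH m' _ Im') => [|w Hw Hwm]; first by rewrite -ltnS (leq_trans Hlt Hd).
by exists w => //; apply: lepm_trans Hwm le'.
Qed.


Section Prime.
Variable Q : {set 'I_n}.
Definition Cb (m : mon) := [exists j, (j \in Q) && (0 < m j)%N].

Lemma CbP m : reflect (Cq Q m) (Cb m).
Proof.
apply: (iffP existsP) => [[j /andP [H1 H2]]|[j H1 H2]]; exists j => //.
by rewrite H1.
Qed.

Definition proj (p : poly) := \sum_(m <- msupp p | ~~ Cb m) p@_m *: 'X_[m].
Definition rest (p : poly) := \sum_(m <- msupp p | Cb m) p@_m *: 'X_[m].

Lemma proj_rest p : p = rest p + proj p.
Proof. by rewrite {1}(mpolyE p) (bigID Cb) /=. Qed.

Lemma rest_in p : monoprime Q (rest p).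
Proof.
apply/monoprime_mon => m /msupp_sum_le /flattenP [sq /mapP [m' Hm' ->]].
move=> /msuppZ_le; rewrite msuppX mem_seq1 => /eqP ->.
by move: Hm'; rewrite mem_filter => /andP [/CbP].
Qed.

Lemma proj_supp p : perm_eq (msupp (proj p)) [seq m <- msupp p | ~~ Cb m].
Proof.
rewrite /proj -big_filter; apply: msupp_sumX; first exact/filter_uniq/msupp_uniq.
by move=> m; rewrite mem_filter => /andP [_]; rewrite mcoeff_msupp.
Qed.

Lemma monoprime_prime : prime_ideal (@monoprime K n Q).
Proof.
have [M0 MD MM] := monoprime_Ideal Q.
split => //.
  move/monoprime_mon => /(_ 0%MM); rewrite -mpolyX0 msuppX mem_seq1 eqxx.
  by case=> // j _; rewrite mnm0E.
move=> g h Hgh; apply: Classical_Prop.NNPP => Hn; case: (Classical_Prop.not_or_and _ _ Hn) => Hg Hh.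
have nz : forall p, ~ monoprime Q p -> proj p != 0.
  move=> p Hp; apply/eqP => H0; apply: Hp; rewrite (proj_rest p) H0 addr0.
  exact: rest_in.
have Hpp : monoprime Q (proj g * proj h).
  have -> : proj g * proj h = g * h + (-1) * (rest g * h) + (-1) * (proj g * rest h).
    have key : forall (g h rg pg rh ph : poly), g = rg + pg -> h = rh + ph ->
        pg * ph = g * h + (-1) * (rg * h) + (-1) * (pg * rh).
      by move=> ? ? ? ? ? ? -> ->; ring.
    exact: key (proj_rest g) (proj_rest h).
  apply: (MD); first apply: (MD) => //.
    by apply: (MM); rewrite mulrC; apply: (MM); apply: rest_in.
  by apply: (MM); apply: (MM); apply: rest_in.
have /eqP nz2 : proj g * proj h != 0 by rewrite mulf_neq0 // nz.
case E : (msupp (proj g * proj h)) => [|m s].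
  by apply: nz2; apply: msuppnil0.
have Hm : m \in msupp (proj g * proj h) by rewrite E mem_head.
have := (monoprime_mon Q _).1 Hpp m Hm.
move: Hm => /msuppM_le /allpairsP [[a b] /= [Ha Hb ->]].
move: Ha Hb; rewrite !(perm_mem (proj_supp _)) !mem_filter => /andP [Ha _] /andP [Hb _].
case=> j Hj; rewrite mnmDE.
have Ea : a j = 0%N.
  apply/eqP; rewrite -leqn0 leqNgt; apply/negP => H; apply: (negP Ha); apply/CbP.
  by exists j.
have Eb : b j = 0%N.
  apply/eqP; rewrite -leqn0 leqNgt; apply/negP => H; apply: (negP Hb); apply/CbP.
  by exists j.
by rewrite Ea Eb.
Qed.
End Prime.

End Mon.

Section Red.
Variable n : nat.
Notation mon := 'X_{1..n}.
Variables (C D : mon -> Prop).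
Hypothesis Dup : forall a b, D a -> (a <= b)%MM -> D b.
Hypothesis Cup : forall a b, C a -> C (a + b)%MM.
Hypothesis Cpr : forall a b, C (a + b)%MM -> C a \/ C b.
Hypothesis C0 : ~ C 0%MM.

Lemma reduce_witness (M : seq mon) :
  (forall g, C g <-> (forall m, m \in M -> D (g + m)%MM)) ->
  exists u, forall g, C g <-> D (g + u)%MM.
Proof.
move: {2}(size M) (erefl (size M)) => k; elim: k M => [|k IH] [|m0 M] //= Hs HM.
- by exfalso; apply: C0; apply/HM.
case: (classic (forall g, D (g + m0)%MM -> C g)) => Hc.
  exists m0 => g; split => [/HM|]; last exact: Hc.
  by apply; rewrite mem_head.
have [g0 [Dg0 nCg0]] : exists g0, D (g0 + m0)%MM /\ ~ C g0.
  apply: NNPP => Hn; apply: Hc => g Hg; apply: NNPP => nC; apply: Hn; by exists g.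
apply: (IH [seq (g0 + m)%MM | m <- M]); first by rewrite size_map; case: Hs.
move=> g; split.
  move=> Cg m /mapP [m' Hm' ->]; rewrite addmA.
  have Hin : m' \in m0 :: M by rewrite in_cons Hm' orbT.
  exact: ((HM (g + g0)%MM).1 (Cup g0 Cg) m' Hin).
move=> H; have : C (g + g0)%MM.
  apply/HM => m; rewrite in_cons => /orP [/eqP ->|Hm].
    apply: (Dup Dg0); rewrite -addmA [(g + _)%MM]addmC; exact: lem_addr.
  by rewrite -addmA; apply: H; apply/mapP; exists m.
by case/Cpr.
Qed.
End Red.

Section Aux.
Variable n : nat.
Notation mon := 'X_{1..n}.

Lemma msum_cat (a b : seq mon) : msum (a ++ b) = (msum a + msum b)%MM.
Proof. by rewrite /msum big_cat. Qed.

Lemma msum_take k (ts : seq mon) : (msum (take k ts) <= msum ts)%MM.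
Proof. by rewrite -{2}(cat_take_drop k ts) msum_cat; exact: lem_addr. Qed.

Lemma mem_le_msum x (ts : seq mon) : x \in ts -> (x <= msum ts)%MM.
Proof.
elim: ts => [|y ts IH] //; rewrite in_cons /msum big_cons => /orP [/eqP ->|H].
  exact: lem_addr.
by apply: lepm_trans (IH H) _; exact: lem_addl.
Qed.

Definition zi (i : 'I_n) (m : mon) : mon := [multinom (if k == i then 0%N else m k) | k < n].

Lemma ziE i m k : zi i m k = if k == i then 0%N else m k.
Proof. by rewrite mnmE. Qed.

Lemma zi_le i m : (zi i m <= m)%MM.
Proof. by apply/mnm_lepP => k; rewrite ziE; case: ifP. Qed.
End Aux.

Unset Implicit Arguments.

Theorem proposition2p2 (K : fieldType) (n : nat) (I : {mpoly K[n]} -> Prop)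
  (l : nat) (v : 'X_{1..n}) (P : {set 'I_n}) (s : nat) :
  is_monomial_ideal I ->
  (0 < l)%N ->
  squarefree v ->
  ideal_pow I l 'X_[v] ->
  (0 < s)%N ->
  (forall i : 'I_n, (0 < v i)%N ->
     ~ Ass (ideal_pow (deletion I i) s) (@monoprime K n (P :\ i))) ->
  Ass (ideal_pow I s) (@monoprime K n P) ->
  (l < s)%N.
Proof.
move=> HI _ Hsq Hv _ Hdel [_ [f Hf]].
rewrite ltnNge; apply/negP => Hsl.
have MI := is_mon_mideal HI; have II := is_mon_Ideal HI.
have powX : forall k m, ideal_pow I k 'X_[m] <-> Dpow I k m.
  by move=> k m; rewrite pow_mon // InMon_X.
have Dv : Dpow I s v.
  case: ((powX l v).1 Hv) => ts [Hs Hts Hle].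
  exists (take s ts); split.
  - by rewrite size_take Hs; case: ltngtP Hsl => // /eqP; rewrite eqn_leq => /andP [].
  - by move=> x /mem_take; apply: Hts.
  - exact: lepm_trans (msum_take _ _) Hle.
have Dup : forall a b, Dpow I s a -> (a <= b)%MM -> Dpow I s b.
  move=> a b [ts [H1 H2 H3]] Hab; exists ts; split => //; exact: lepm_trans H3 Hab.
have Cmon : forall (Q : {set 'I_n}) m, @monoprime K n Q 'X_[m] <-> Cq Q m.
  by move=> Q m; rewrite monoprime_mon InMon_X.
have HM : forall g, Cq P g <-> (forall m, m \in msupp f -> Dpow I s (g + m)%MM).
  move=> g; rewrite -Cmon Hf pow_mon // mulrC; split.
    move=> H m Hm; apply: H; rewrite (perm_mem (msuppMX _ _)); apply/mapP; by exists m.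
  move=> H m; rewrite (perm_mem (msuppMX _ _)) => /mapP [m' Hm' ->]; exact: H.
have [u Hu] : exists u, forall g, Cq P g <-> Dpow I s (g + u)%MM.
  apply: (reduce_witness _ _ _ _ HM).
  - exact: Dup.
  - move=> a b [j Hj Ha]; exists j => //; rewrite mnmDE; exact: leq_trans Ha (leq_addr _ _).
  - move=> a b [j Hj]; rewrite mnmDE; case: (posnP (a j)) => Ha.
      by rewrite Ha add0n => Hb; right; exists j.
    by move=> _; left; exists j.
  - by case=> j _; rewrite mnm0E.
have nDu : ~ Dpow I s u.
  by move=> H; have := (Hu 0%MM).2; rewrite add0m => /(_ H) [j _]; rewrite mnm0E.
have [i Hi] : exists i, ~ (v i <= u i)%N.
  apply: NNPP => Hn; apply: nDu; apply: (Dup _ _ Dv); apply/mnm_lepP => i.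
  by apply: NNPP => H; apply: Hn; exists i.
have ui0 : u i = 0%N.
  by move: Hi (Hsq i); case: (u i) => // k; case: (v i) => [|[|]].
have vi0 : (0 < v i)%N by move: Hi; rewrite ui0; case: (v i).
apply: (Hdel i vi0); split; first exact: monoprime_prime.
exists 'X_[u] => g.
rewrite monoprime_mon pow_mon; [|exact: deletion_mideal|exact: deletion_Ideal].
have delX : forall x, deletion I i 'X_[x] <->
    exists2 w, min_gens I w /\ w i = 0%N & (w <= x)%MM.
  by move=> x; rewrite deletion_mon InMon_X.
suff key : forall m, Cq (P :\ i) m <-> Dpow (deletion I i) s (u + m)%MM.
  split.
    move=> H m; rewrite (perm_mem (msuppMX _ _)) => /mapP [m' Hm' ->].
    by apply/key; apply: H.
  move=> H m Hm; apply/key; apply: H.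
  by rewrite (perm_mem (msuppMX _ _)); apply/mapP; exists m.
move=> m; split.
  case=> j; rewrite in_setD1 => /andP [nji jP] Hmj.
  have : Cq P (zi i m) by exists j => //; rewrite ziE (negbTE nji).
  move/Hu => [ts [Hs Hts Hle]].
  exists ts; split => //; last first.
    apply: lepm_trans Hle _; apply/mnm_lepP => k; rewrite !mnmDE ziE addnC.
    by case: ifP => // _; rewrite leq_add2l leq0n.
  move=> x Hx; apply/delX.
  have xi0 : x i = 0%N.
    have := mnm_lepP (lepm_trans (mem_le_msum Hx) Hle) i.
    by rewrite mnmDE ziE eqxx ui0 leqn0 => /eqP.
  case: (mingen_exists (Hts x Hx)) => w Hw Hwx; exists w => //; split => //.
  by have := mnm_lepP Hwx i; rewrite xi0 leqn0 => /eqP.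
case=> ts [Hs Hts Hle].
have : Dpow I s (zi i m + u)%MM.
  exists (map (zi i) ts); split; first by rewrite size_map.
    move=> x' /mapP [x Hx ->].
    case: ((delX x).1 (Hts x Hx)) => w [[Iw _] wi0] Hwx.
    apply: (Ideal_up II Iw); apply/mnm_lepP => k; rewrite ziE.
    by case: eqP => [->|_]; [rewrite wi0 | exact: mnm_lepP Hwx k].
  apply/mnm_lepP => k; rewrite /msum big_map mnm_sumE mnmDE ziE.
  have := mnm_lepP Hle k; rewrite -/(msum ts) /msum mnm_sumE mnmDE.
  case: eqP => [->|nki] H; first by rewrite big1 // => x _; rewrite ziE eqxx.
  rewrite addnC; apply: leq_trans H; rewrite leq_eqVlt; apply/orP; left; apply/eqP.
  by apply: eq_bigr => x _; rewrite ziE (introF eqP nki).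
move/Hu => [j jP]; rewrite ziE; case: eqP => // nji Hmj.
by exists j => //; rewrite in_setD1 jP andbT; apply/eqP.
Qed.
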